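(* The game operator $F$ is Lipschitz continuous: there is a constant $\gamma$ with $\|F(Z)-F(Z')\|_*\le\gamma\|Z-Z'\|$ for all joint states $Z,Z'$. Specifically, with $d=n+m$: for the Frobenius norm pair ($\|\cdot\|=\|\cdot\|_*=\|\cdot\|_F$) one may take $\gamma=O(2^d)$, and for the pair $\|\cdot\|=\|\cdot\|_1$ (Schatten-1/trace norm), $\|\cdot\|_*=\|\cdot\|_\infty$ (operator norm) one may take $\gamma=O(1)$.
   Context: Alice's strategy set is $\mathcal{A}=\{\alpha\in\mathbb{C}^{2^n\times 2^n}:\alpha\succeq0,\ \operatorname{Tr}\alpha=1\}$ and Bob's is $\mathcal{B}=\{\beta\in\mathbb{C}^{2^m\times 2^m}:\beta\succeq0,\ \operatorname{Tr}\beta=1\}$; joint states are pairs $Z=(\alpha,\beta)$, identified with block-diagonal matrices $\mathrm{diag}(\alpha,\beta)$ for the purpose of norms. Given a POVM $\{P_\omega\}_{\omega\in\Omega}$ on $n+m$ qubits with finite $\Omega$ and a finite-valued utility $u:\Omega\to[-1,1]$, the payoff observable is $U=\sum_\omega u(\omega)P_\omega$, and $F(\alpha,\beta)=(\operatorname{Tr}_{\mathcal B}[U^\dagger(I_{2^n}\otimes\beta)],\ -\operatorname{Tr}_{\mathcal A}[U^\dagger(\alpha\otimes I_{2^m})])$, with $\operatorname{Tr}_{\mathcal A},\operatorname{Tr}_{\mathcal B}$ the partial traces over Alice's and Bob's subsystems. The $O(\cdot)$ bounds are in terms of $d$, uniformly over such games. *)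

(* Defs.v *)
From HB Require Import structures.
From mathcomp Require Import all_boot all_order all_algebra.
From mathcomp Require Import all_classical all_reals.
From mathcomp Require Export complex mxtens.
Set Implicit Arguments.
Unset Strict Implicit.
Unset Printing Implicit Defensive.
Import Order.TTheory GRing.Theory Num.Theory.
Local Open Scope ring_scope.

Section QGame.
Variable R : realType.
Local Notation C := (R[i]).

Definition cabs (z : C) : R := complex.Re `|z|.

Definition dagger {p q : nat} (A : 'M[C]_(p, q)) : 'M[C]_(q, p) :=
  (map_mx Num.conj A)^T.

Definition psd {N : nat} (A : 'M[C]_N) : Prop :=
  forall v : 'cV[C]_N, 0 <= (dagger v *m A *m v) 0 0.

Definition density {N : nat} (A : 'M[C]_N) : Prop := psd A /\ \tr A = 1.

Definition povm {N : nat} {Omega : finType} (P : Omega -> 'M[C]_N) : Prop :=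
  (forall w, psd (P w)) /\ \sum_(w : Omega) P w = 1%:M.

Definition payoff {N : nat} {Omega : finType} (P : Omega -> 'M[C]_N)
  (u : Omega -> R) : 'M[C]_N := \sum_(w : Omega) ((u w)%:C)%C *: P w.

(* partial traces on C^p (x) C^q, with the indexing convention of tensmx
   (A *t B) (i,j) (k,l) = A i k * B j l *)
Definition ptraceB {p q : nat} (X : 'M[C]_(p * q)) : 'M[C]_p :=
  \matrix_(i, k) \sum_(j < q) X (mxtens_index (i, j)) (mxtens_index (k, j)).
Definition ptraceA {p q : nat} (X : 'M[C]_(p * q)) : 'M[C]_q :=
  \matrix_(j, l) \sum_(i < p) X (mxtens_index (i, j)) (mxtens_index (i, l)).

(* the game operator F(alpha, beta), a pair identified with the
   block-diagonal matrix diag(F_A, F_B) *)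
Definition gameF {p q : nat} (U : 'M[C]_(p * q)) (alpha : 'M[C]_p)
  (beta : 'M[C]_q) : 'M[C]_(p + q) :=
  block_mx (ptraceB (dagger U *m (1%:M *t beta))) 0
           0 (- ptraceA (dagger U *m (alpha *t 1%:M))).

(* joint state Z = (alpha, beta) identified with diag(alpha, beta) *)
Definition joint {p q : nat} (alpha : 'M[C]_p) (beta : 'M[C]_q) :
  'M[C]_(p + q) := block_mx alpha 0 0 beta.

Definition frob {p q : nat} (A : 'M[C]_(p, q)) : R :=
  Num.sqrt (\sum_i \sum_j cabs (A i j) ^+ 2).

Definition vnorm {N : nat} (v : 'cV[C]_N) : R := frob v.

Definition opnorm {N : nat} (A : 'M[C]_N) : R :=
  sup [set x : R | exists v : 'cV[C]_N, vnorm v <= 1 /\ x = vnorm (A *m v)].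

(* trace norm (Schatten-1): Tr |A| with |A| = sqrt(A^dagger A) the unique
   PSD square root of A^dagger A *)
Definition absmx {N : nat} (A : 'M[C]_N) : 'M[C]_N :=
  xget 0 [set P : 'M[C]_N | psd P /\ P *m P = dagger A *m A].
Definition tracenorm {N : nat} (A : 'M[C]_N) : R := complex.Re (\tr (absmx A)).

End QGame.

(* Main.v *)
Require Import Defs.
From HB Require Import structures.
From mathcomp Require Import all_boot all_order all_algebra.
From mathcomp Require Import all_classical all_reals.
From mathcomp Require Import complex mxtens.
From mathcomp Require Import sesquilinear spectral.
From mathcomp Require Import ring lra.
Import Order.TTheory GRing.Theory Num.Theory.
Local Open Scope ring_scope.
Section S.
Variable R : realType.
Local Notation C := R[i].

Lemma conjE (x : C) : Num.conj x = conjc x.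
Proof. reflexivity. Qed.

Lemma cabsC (z : C) : ((cabs z)%:C)%C = `|z|.
Proof. by rewrite /cabs RRe_real // normr_real. Qed.

Lemma cabs_ge0 (z : C) : 0 <= cabs z.
Proof. by rewrite -ler0c cabsC. Qed.

Lemma cabsD (x y : C) : cabs (x + y) <= cabs x + cabs y.
Proof. by rewrite -lecR raddfD /= !cabsC ler_normD. Qed.

Lemma cabsM (x y : C) : cabs (x * y) = cabs x * cabs y.
Proof. by apply: complexI; rewrite rmorphM /= !cabsC normrM. Qed.

Lemma cabsJ (x : C) : cabs (Num.conj x) = cabs x.
Proof. by apply: complexI; rewrite !cabsC norm_conjC. Qed.

Lemma cabsN (x : C) : cabs (- x) = cabs x.
Proof. by apply: complexI; rewrite !cabsC normrN. Qed.

Lemma cabs_sq (z : C) : (((cabs z) ^+ 2)%:C)%C = z * Num.conj z.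
Proof. by rewrite rmorphXn /= cabsC sqr_normc. Qed.

Lemma cabs_sqJ (z : C) : (((cabs z) ^+ 2)%:C)%C = Num.conj z * z.
Proof. by rewrite cabs_sq mulrC. Qed.

Lemma cabs_real (r : R) : cabs ((r%:C)%C) = `|r|.
Proof. by rewrite /cabs /=; simpc; rewrite expr0n /= addr0 sqrtr_sqr. Qed.

Lemma cabs_Re (z : C) : complex.Re z <= cabs z.
Proof. 
apply: (le_trans (ler_norm _)); rewrite -lecR cabsC; exact: normc_ge_Re.
Qed.

Lemma cabs0 : cabs (0 : C) = 0.
Proof. by apply: complexI; rewrite cabsC normr0. Qed.

Lemma cabs_eq0 (z : C) : (cabs z == 0) = (z == 0).
Proof. by rewrite -(inj_eq (@complexI _)) cabsC /= normr_eq0. Qed.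

Lemma cabs_sum (I : finType) (F : I -> C) : cabs (\sum_i F i) <= \sum_i cabs (F i).
Proof.
elim/big_ind2: _ => //; first by rewrite cabs0.
move=> x1 x2 y1 y2 h1 h2; apply: le_trans (cabsD _ _) _; exact: lerD.
Qed.

Lemma cabs_ge0C (z : C) : 0 <= z -> ((cabs z)%:C)%C = z.
Proof. by move=> h; rewrite cabsC ger0_norm. Qed.


Definition sf {N : nat} (M : 'M[C]_N) (y x : 'cV[C]_N) : C :=
  (dagger y *m M *m x) 0 0.
Definition nsq {N : nat} (v : 'cV[C]_N) : R := \sum_i cabs (v i 0) ^+ 2.

Lemma daggerE p q (A : 'M[C]_(p, q)) i j : dagger A i j = Num.conj (A j i).
Proof. by rewrite !mxE. Qed.

Lemma daggerK p q (A : 'M[C]_(p, q)) : dagger (dagger A) = A.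
Proof. by apply/matrixP=> i j; rewrite !daggerE conjCK. Qed.

Lemma dagger_mul p q r (A : 'M[C]_(p, q)) (B : 'M[C]_(q, r)) :
  dagger (A *m B) = dagger B *m dagger A.
Proof.
apply/matrixP=> i j; rewrite daggerE !mxE rmorph_sum; apply: eq_bigr => k _.
by rewrite !daggerE rmorphM mulrC.
Qed.

Lemma daggerD p q (A B : 'M[C]_(p, q)) : dagger (A + B) = dagger A + dagger B.
Proof. by apply/matrixP=> i j; rewrite !mxE rmorphD. Qed.

Lemma daggerN p q (A : 'M[C]_(p, q)) : dagger (- A) = - dagger A.
Proof. by apply/matrixP=> i j; rewrite !mxE rmorphN. Qed.

Lemma daggerB p q (A B : 'M[C]_(p, q)) : dagger (A - B) = dagger A - dagger B.
Proof. by rewrite daggerD daggerN. Qed.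

Lemma daggerZ p q c (A : 'M[C]_(p, q)) : dagger (c *: A) = Num.conj c *: dagger A.
Proof. by apply/matrixP=> i j; rewrite !mxE rmorphM. Qed.

Lemma dagger_sum p q (I : finType) (F : I -> 'M[C]_(p, q)) :
  dagger (\sum_i F i) = \sum_i dagger (F i).
Proof.
apply/matrixP=> a b; rewrite daggerE !summxE rmorph_sum.
by apply: eq_bigr => i _; rewrite daggerE.
Qed.

Lemma dagger1 p : dagger (1%:M : 'M[C]_p) = 1%:M.
Proof. by apply/matrixP=> i j; rewrite !mxE rmorph_nat eq_sym. Qed.

Lemma sf_conj N (M : 'M[C]_N) y x : sf M y x = Num.conj (sf (dagger M) x y).
Proof.
rewrite /sf -daggerE !dagger_mul daggerK mulmxA.
by rewrite daggerK.
Qed.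

Lemma sfDl N (M : 'M[C]_N) y1 y2 x : sf M (y1 + y2) x = sf M y1 x + sf M y2 x.
Proof. by rewrite /sf daggerD !mulmxDl mxE. Qed.
Lemma sfDr N (M : 'M[C]_N) y x1 x2 : sf M y (x1 + x2) = sf M y x1 + sf M y x2.
Proof. by rewrite /sf !mulmxDr mxE. Qed.
Lemma sfNl N (M : 'M[C]_N) y x : sf M (- y) x = - sf M y x.
Proof. by rewrite /sf daggerN !mulNmx mxE. Qed.
Lemma sfNr N (M : 'M[C]_N) y x : sf M y (- x) = - sf M y x.
Proof. by rewrite /sf !mulmxN mxE. Qed.
Lemma sfZl N (M : 'M[C]_N) c y x : sf M (c *: y) x = Num.conj c * sf M y x.
Proof. by rewrite /sf daggerZ -!scalemxAl mxE. Qed.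
Lemma sfZr N (M : 'M[C]_N) c y x : sf M y (c *: x) = c * sf M y x.
Proof. by rewrite /sf -!scalemxAr mxE. Qed.
Lemma sfMD N (M1 M2 : 'M[C]_N) y x : sf (M1 + M2) y x = sf M1 y x + sf M2 y x.
Proof. by rewrite /sf mulmxDr mulmxDl mxE. Qed.
Lemma sfMN N (M : 'M[C]_N) y x : sf (- M) y x = - sf M y x.
Proof. by rewrite /sf mulmxN mulNmx mxE. Qed.
Lemma sfMZ N c (M : 'M[C]_N) y x : sf (c *: M) y x = c * sf M y x.
Proof. by rewrite /sf -scalemxAr -scalemxAl mxE. Qed.
Lemma sfM_sum N (I : finType) (F : I -> 'M[C]_N) y x :
  sf (\sum_i F i) y x = \sum_i sf (F i) y x.
Proof.
rewrite /sf mulmx_sumr mulmx_suml summxE; apply: eq_bigr => i _; by [].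
Qed.

Lemma sf1 N (x : 'cV[C]_N) : sf 1%:M x x = ((nsq x)%:C)%C.
Proof.
rewrite /sf mulmx1 /nsq rmorph_sum mxE; apply: eq_bigr => i _.
by rewrite daggerE -cabs_sqJ.
Qed.

Lemma nsq_ge0 N (x : 'cV[C]_N) : 0 <= nsq x.
Proof. by apply: sumr_ge0 => i _; rewrite exprn_ge0 ?cabs_ge0. Qed.

Lemma vnormE N (x : 'cV[C]_N) : vnorm x = Num.sqrt (nsq x).
Proof. by rewrite /vnorm /frob /nsq; congr Num.sqrt; apply: eq_bigr => i _; rewrite big_ord1. Qed.

Lemma vnorm_ge0 N (x : 'cV[C]_N) : 0 <= vnorm x.
Proof. by rewrite vnormE sqrtr_ge0. Qed.

Lemma vnorm_sq N (x : 'cV[C]_N) : vnorm x ^+ 2 = nsq x.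
Proof. by rewrite vnormE sqr_sqrtr // nsq_ge0. Qed.


Lemma dagger_delta p q i j : dagger (delta_mx i j : 'M[C]_(p, q)) = delta_mx j i.
Proof. by apply/matrixP=> a b; rewrite !mxE rmorph_nat andbC. Qed.

Lemma sf_delta N (Q : 'M[C]_N) i j : sf Q (delta_mx i 0) (delta_mx j 0) = Q i j.
Proof. by rewrite /sf dagger_delta -rowE -colE !mxE. Qed.

Lemma sf_zero N (Q : 'M[C]_N) : (forall z, sf Q z z = 0) -> Q = 0.
Proof.
move=> H.
have h : forall x y, sf Q x y + sf Q y x = 0.
  move=> x y; have := H (x + y); rewrite sfDl !sfDr H H add0r addr0.
  by rewrite addrC.
apply/matrixP=> i j; rewrite mxE -sf_delta.
set x := delta_mx i 0; set y := delta_mx j 0.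
have h1 := h x y; have h2 := h x ('i *: y).
rewrite sfZr sfZl conjCi mulNr -mulrBr in h2.
move/eqP: h2; rewrite mulf_eq0 (negPf (neq0Ci _)) /= subr_eq0 => /eqP h2.
move: h1; rewrite h2 -mulr2n => /eqP; rewrite mulrn_eq0 /= => /eqP; by [].
Qed.

Lemma psd_herm N (P : 'M[C]_N) : psd P -> dagger P = P.
Proof.
move=> hP; apply/eqP; rewrite -subr_eq0; apply/eqP; apply: sf_zero => z.
rewrite sfMD sfMN -[sf (dagger P) z z]conjCK -sf_conj.
have := hP z; rewrite -/(sf P z z) => /ger0_real/CrealP ->.
by rewrite subrr.
Qed.


Lemma cabs_ReE (z : C) : 0 <= z -> cabs z = complex.Re z.
Proof. by move=> h; rewrite -[in RHS](cabs_ge0C _ h). Qed.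

Lemma nsqZ N c (x : 'cV[C]_N) : nsq (c *: x) = cabs c ^+ 2 * nsq x.
Proof.
apply: complexI; rewrite -sf1 sfZl sfZr sf1 rmorphM /= cabs_sqJ; ring.
Qed.

Lemma nsq0 N (x : 'cV[C]_N) : nsq x = 0 -> x = 0.
Proof.
move=> /eqP; rewrite psumr_eq0 => [/allP h|i _]; last by rewrite exprn_ge0 ?cabs_ge0.
apply/matrixP=> i j; rewrite ord1 mxE; apply/eqP; rewrite -cabs_eq0.
by have := h i (mem_index_enum _); rewrite /= sqrf_eq0.
Qed.

Lemma vnorm0 N (x : 'cV[C]_N) : vnorm x = 0 -> x = 0.
Proof. by move=> h; apply: nsq0; rewrite -vnorm_sq h expr0n. Qed.

Lemma sf0r N (M : 'M[C]_N) y : sf M y 0 = 0.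
Proof. by rewrite /sf mulmx0 mxE. Qed.
Lemma sf0l N (M : 'M[C]_N) x : sf M 0 x = 0.
Proof. by rewrite /sf (_ : dagger 0 = 0) ?mul0mx ?mxE //; apply/matrixP=> i j; rewrite !mxE rmorph0. Qed.

Section Polar.
Variables (N : nat) (U : 'M[C]_N).
Hypothesis hU : dagger U = U.
Hypothesis bU : forall z, cabs (sf U z z) <= nsq z.

Lemma polar_Re x y : 2%:R * complex.Re (sf U y x) <= nsq x + nsq y.
Proof.
set s := sf U y x.
have e1 : sf U x y = Num.conj s by rewrite sf_conj hU.
have e2 : ((2%:R * complex.Re s) *+ 2)%:C%C = sf U (y + x) (y + x) - sf U (y - x) (y - x).
  rewrite rmorphMn rmorphM /= ReJ_add rmorph_nat.
  rewrite !sfDl !sfDr !sfNl !sfNr e1 -/s conjE.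
  by field.
have e3 : (nsq (y + x) + nsq (y - x))%:C%C = ((nsq x + nsq y) *+ 2)%:C%C.
  rewrite rmorphD rmorphMn rmorphD /= -!sf1 !sfDl !sfDr !sfNl !sfNr; ring.
have : (2%:R * complex.Re s) *+ 2 <= (nsq x + nsq y) *+ 2.
  have -> : (2%:R * complex.Re s) *+ 2 = complex.Re (sf U (y + x) (y + x) - sf U (y - x) (y - x)).
    by rewrite -e2.
  rewrite -(complexI e3) raddfB /=.
  apply: lerD; first by apply: le_trans (cabs_Re _) (bU _).
  by rewrite -raddfN /=; apply: le_trans (cabs_Re _) _; rewrite cabsN.
by rewrite lerMn2r.
Qed.

Lemma polar_abs x y : 2%:R * cabs (sf U y x) <= nsq x + nsq y.
Proof.
set s := sf U y x.
have [s0|s0] := eqVneq s 0.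
  by rewrite s0 cabs0 mulr0 addr_ge0 ?nsq_ge0.
have c0 : ((cabs s)%:C)%C != 0 by rewrite cabsC normr_eq0.
set phi := Num.conj s / ((cabs s)%:C)%C.
have e1 : sf U y (phi *: x) = ((cabs s)%:C)%C.
  rewrite sfZr -/s /phi mulrAC -cabs_sqJ rmorphXn /= expr2.
  by rewrite mulfK.
have e2 : cabs phi = 1.
  rewrite /phi cabsM cabsJ -fmorphV cabs_real ger0_norm ?invr_ge0 ?cabs_ge0 //.
  by rewrite mulfV // cabs_eq0.
have := polar_Re (phi *: x) y.
by rewrite e1 /= nsqZ e2 expr1n mul1r.
Qed.

Lemma polar_main x y : cabs (sf U y x) <= vnorm y * vnorm x.
Proof.
have [->|hx] := eqVneq x 0; first by rewrite sf0r cabs0 mulr_ge0 ?vnorm_ge0.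
have [->|hy] := eqVneq y 0; first by rewrite sf0l cabs0 mulr_ge0 ?vnorm_ge0.
set s := sf U y x.
have px : 0 < vnorm x.
  by rewrite lt_def vnorm_ge0 andbT; apply/eqP => /vnorm0 /eqP; rewrite (negPf hx).
have py : 0 < vnorm y.
  by rewrite lt_def vnorm_ge0 andbT; apply/eqP => /vnorm0 /eqP; rewrite (negPf hy).
have := polar_abs ((vnorm y)%:C%C *: x) ((vnorm x)%:C%C *: y).
rewrite sfZl sfZr !nsqZ !cabs_real !ger0_norm ?vnorm_ge0 // -!vnorm_sq.
rewrite conjE conjc_real !cabsM !cabs_real !ger0_norm ?vnorm_ge0 // -/s.
move=> h.
have hp : 0 < vnorm x * vnorm y by rewrite mulr_gt0.
rewrite -(ler_pM2l hp).
have -> : vnorm x * vnorm y * (vnorm y * vnorm x) = (vnorm y ^+ 2 * vnorm x ^+ 2 + vnorm x ^+ 2 * vnorm y ^+ 2) / 2%:R.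
  by field.
rewrite ler_pdivlMr ?ltr0n //; apply: le_trans h; rewrite mulrC mulrA. 
by rewrite le_eqVlt; apply/orP; left; apply/eqP; ring.
Qed.
End Polar.


Section Payoff.
Variables (N : nat) (Omega : finType) (P : Omega -> 'M[C]_N) (u : Omega -> R).
Hypothesis hP : povm P.
Hypothesis hu : forall w, `|u w| <= 1.

Lemma payoff_herm : dagger (payoff P u) = payoff P u.
Proof.
rewrite /payoff dagger_sum; apply: eq_bigr => w _.
by rewrite daggerZ psd_herm ?conjE ?conjc_real //; case: hP.
Qed.

Lemma payoff_bound z : cabs (sf (payoff P u) z z) <= nsq z.
Proof.
case: hP => hP1 hP2.
rewrite /payoff sfM_sum; apply: le_trans (cabs_sum _ _) _.
apply: (@le_trans _ _ (\sum_w cabs (sf (P w) z z))).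
  apply: ler_sum => w _; rewrite sfMZ cabsM cabs_real.
  by apply: ler_piMl; rewrite ?cabs_ge0.
rewrite le_eqVlt; apply/orP; left; apply/eqP.
apply: complexI; rewrite -sf1 -hP2 sfM_sum rmorph_sum.
by apply: eq_bigr => w _; exact: (cabs_ge0C _ (hP1 w z)).
Qed.

Lemma payoff_main x y : cabs (sf (payoff P u) y x) <= vnorm y * vnorm x.
Proof. exact: (@polar_main _ _ payoff_herm payoff_bound). Qed.
End Payoff.


Lemma sum_tens (V : zmodType) p q (F : 'I_(p * q) -> V) :
  \sum_r F r = \sum_i \sum_j F (mxtens_index (i, j)).
Proof.
rewrite pair_big /= (reindex (@mxtens_index p q)) /=; last first.
  by exists (@mxtens_unindex p q) => x _; rewrite (mxtens_indexK, mxtens_unindexK).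
by apply: eq_bigr => -[i j].
Qed.

Lemma sf_entry N (X : 'M[C]_N) w v :
  sf X w v = \sum_i \sum_k Num.conj (w i 0) * X i k * v k 0.
Proof.
rewrite /sf mxE exchange_big; apply: eq_bigr => k _; rewrite mxE mulr_suml.
by apply: eq_bigr => i _; rewrite daggerE.
Qed.

Lemma ptB_entry p q (U : 'M[C]_(p * q)) (M : 'M[C]_q) i k :
  ptraceB (dagger U *m (1%:M *t M)) i k =
  \sum_j \sum_l Num.conj (U (mxtens_index (k, l)) (mxtens_index (i, j))) * M l j.
Proof.
rewrite mxE; apply: eq_bigr => j _; rewrite mxE sum_tens.
rewrite (bigD1 k) //= [X in _ + X]big1 ?addr0; last first.
  move=> k' hk; apply: big1 => l _.
  by rewrite tensmxE [1%:M _ _]mxE (negPf hk) mul0r mulr0.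
by apply: eq_bigr => l _; rewrite tensmxE daggerE mxE eqxx mul1r.
Qed.

Lemma ptA_entry p q (U : 'M[C]_(p * q)) (M : 'M[C]_p) j l :
  ptraceA (dagger U *m (M *t 1%:M)) j l =
  \sum_i \sum_k Num.conj (U (mxtens_index (k, l)) (mxtens_index (i, j))) * M k i.
Proof.
rewrite mxE; apply: eq_bigr => i _; rewrite mxE sum_tens.
apply: eq_bigr => k _.
rewrite (bigD1 l) //= [X in _ + X]big1 ?addr0; last first.
  by move=> l' hl; rewrite tensmxE [1%:M _ _]mxE (negPf hl) mulr0 mulr0.
by rewrite tensmxE daggerE mxE eqxx mulr1.
Qed.


Definition tv {p q : nat} (v : 'cV[C]_p) (a : 'cV[C]_q) : 'cV[C]_(p * q) :=
  \col_r (v (@mxtens_unindex p q r).1 0 * a (@mxtens_unindex p q r).2 0).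

Lemma tvE p q (v : 'cV[C]_p) (a : 'cV[C]_q) k l :
  tv v a (mxtens_index (k, l)) 0 = v k 0 * a l 0.
Proof. by rewrite mxE mxtens_indexK. Qed.

Lemma rank1E p q (a : 'cV[C]_p) (b : 'cV[C]_q) l j :
  (a *m dagger b) l j = a l 0 * Num.conj (b j 0).
Proof. by rewrite mxE big_ord1 daggerE. Qed.

Lemma ptB_rank1 p q (U : 'M[C]_(p * q)) (a b : 'cV[C]_q) (w v : 'cV[C]_p) :
  sf (ptraceB (dagger U *m (1%:M *t (a *m dagger b)))) w v =
  Num.conj (sf U (tv v a) (tv w b)).
Proof.
rewrite sf_entry [sf U _ _]sf_entry sum_tens rmorph_sum exchange_big /=.
apply: eq_bigr => k _.
transitivity (\sum_i \sum_j \sum_l Num.conj (w i 0) *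
   Num.conj (U (mxtens_index (k,l)) (mxtens_index (i,j))) * (a l 0 * Num.conj (b j 0)) * v k 0).
  apply: eq_bigr => i _; rewrite ptB_entry mulr_sumr mulr_suml; apply: eq_bigr => j _.
  rewrite mulr_sumr mulr_suml; apply: eq_bigr => l _.
  by rewrite rank1E mulrA.
symmetry.
under eq_bigr => l _ do rewrite sum_tens.
rewrite rmorph_sum.
under eq_bigr => l _ do rewrite rmorph_sum.
under eq_bigr => l _ do under eq_bigr => i _ do rewrite rmorph_sum.
rewrite exchange_big /=.
under eq_bigr => i _ do rewrite exchange_big /=.
apply: eq_bigr => i _; apply: eq_bigr => j _; apply: eq_bigr => l _.
rewrite !tvE !rmorphM /= !conjCK; ring.
Qed.


Lemma ptA_rank1 p q (U : 'M[C]_(p * q)) (a b : 'cV[C]_p) (w v : 'cV[C]_q) :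
  sf (ptraceA (dagger U *m ((a *m dagger b) *t 1%:M))) w v =
  Num.conj (sf U (tv a v) (tv b w)).
Proof.
rewrite sf_entry [sf U _ _]sf_entry.
transitivity (\sum_j \sum_l \sum_i \sum_k Num.conj (w j 0) *
   Num.conj (U (mxtens_index (k,l)) (mxtens_index (i,j))) * (a k 0 * Num.conj (b i 0)) * v l 0).
  apply: eq_bigr => j _; apply: eq_bigr => l _.
  rewrite ptA_entry mulr_sumr mulr_suml; apply: eq_bigr => i _.
  rewrite mulr_sumr mulr_suml; apply: eq_bigr => k _.
  by rewrite rank1E mulrA.
symmetry.
rewrite sum_tens rmorph_sum.
under eq_bigr => k _ do rewrite rmorph_sum.
under eq_bigr => k _ do under eq_bigr => l _ do rewrite sum_tens rmorph_sum.
under eq_bigr => k _ do under eq_bigr => l _ do under eq_bigr => i _ do rewrite rmorph_sum.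
under eq_bigr => k _ do under eq_bigr => l _ do rewrite exchange_big.
under eq_bigr => k _ do rewrite exchange_big.
rewrite exchange_big.
under eq_bigr => j _ do rewrite exchange_big.
under eq_bigr => j _ do under eq_bigr => l _ do rewrite exchange_big.
apply: eq_bigr => j _; apply: eq_bigr => l _; apply: eq_bigr => i _; apply: eq_bigr => k _.
rewrite !tvE !rmorphM /= !conjCK; ring.
Qed.


Lemma nsq_tv p q (v : 'cV[C]_p) (a : 'cV[C]_q) : nsq (tv v a) = nsq v * nsq a.
Proof.
rewrite /nsq sum_tens mulr_suml; apply: eq_bigr => k _; rewrite mulr_sumr.
by apply: eq_bigr => l _; rewrite tvE cabsM exprMn.
Qed.

Lemma vnorm_tv p q (v : 'cV[C]_p) (a : 'cV[C]_q) : vnorm (tv v a) = vnorm v * vnorm a.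
Proof. by rewrite !vnormE nsq_tv sqrtrM ?nsq_ge0. Qed.

Section Bounds.
Variables (p q : nat) (Omega : finType) (P : Omega -> 'M[C]_(p * q)) (u : Omega -> R).
Hypothesis hP : povm P.
Hypothesis hu : forall w, `|u w| <= 1.
Local Notation U := (payoff P u).

Lemma ptB_bound (a b : 'cV[C]_q) (w v : 'cV[C]_p) :
  cabs (sf (ptraceB (dagger U *m (1%:M *t (a *m dagger b)))) w v)
  <= vnorm w * vnorm v * (vnorm a * vnorm b).
Proof.
rewrite ptB_rank1 cabsJ; apply: le_trans (@payoff_main _ _ _ _ hP hu _ _) _.
by rewrite !vnorm_tv le_eqVlt; apply/orP; left; apply/eqP; ring.
Qed.

Lemma ptA_bound (a b : 'cV[C]_p) (w v : 'cV[C]_q) :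
  cabs (sf (ptraceA (dagger U *m ((a *m dagger b) *t 1%:M))) w v)
  <= vnorm w * vnorm v * (vnorm a * vnorm b).
Proof.
rewrite ptA_rank1 cabsJ; apply: le_trans (@payoff_main _ _ _ _ hP hu _ _) _.
by rewrite !vnorm_tv le_eqVlt; apply/orP; left; apply/eqP; ring.
Qed.

Lemma nsq_delta N (i : 'I_N) : nsq (delta_mx i 0 : 'cV[C]_N) = 1.
Proof.
rewrite /nsq (bigD1 i) //= big1 ?addr0 => [|j hj]; last by rewrite mxE (negPf hj) /= cabs0 expr0n.
by rewrite mxE !eqxx /= cabs_real normr1 expr1n.
Qed.

Lemma vnorm_delta N (i : 'I_N) : vnorm (delta_mx i 0 : 'cV[C]_N) = 1.
Proof. by rewrite vnormE nsq_delta sqrtr1. Qed.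

Lemma U_entry r s : cabs (U r s) <= 1.
Proof.
rewrite -sf_delta; apply: le_trans (@payoff_main _ _ _ _ hP hu _ _) _.
by rewrite !vnorm_delta mulr1.
Qed.
End Bounds.


Lemma CSsum (I : finType) (F : I -> R) :
  (\sum_i F i) ^+ 2 <= #|I|%:R * \sum_i F i ^+ 2.
Proof.
set S := \sum_i F i; set Q := \sum_i F i ^+ 2.
have e1 i : \sum_j (F i - F j) ^+ 2 = #|I|%:R * F i ^+ 2 - 2%:R * F i * S + Q.
  rewrite (eq_bigr (fun j => F i ^+ 2 - 2%:R * F i * F j + F j ^+ 2)); last by move=> j _; ring.
  rewrite big_split big_split /= sumr_const sumrN -mulr_sumr -/S -/Q.
  by rewrite -[_ *+ #|I|]mulr_natl mulrC.
have h : 0 <= \sum_i \sum_j (F i - F j) ^+ 2.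
  by apply: sumr_ge0 => i _; apply: sumr_ge0 => j _; apply: sqr_ge0.
rewrite (eq_bigr _ (fun i _ => e1 i)) big_split big_split /= in h.
rewrite sumr_const sumrN -mulr_sumr -mulr_suml -/S -/Q -mulr_sumr -/Q in h.
rewrite -[_ *+ #|I|]mulr_natl in h.
rewrite -/S mulr1 -mulr_natl in h.
have e2 : #|(xpredT : pred I)| = #|I| by apply: eq_card.
rewrite e2 in h.
nra.
Qed.


Definition fsq {p q : nat} (A : 'M[C]_(p, q)) : R := \sum_i \sum_j cabs (A i j) ^+ 2.

Lemma fsq_ge0 p q (A : 'M[C]_(p, q)) : 0 <= fsq A.
Proof. by apply: sumr_ge0 => i _; apply: sumr_ge0 => j _; rewrite exprn_ge0 ?cabs_ge0. Qed.

Lemma frobE p q (A : 'M[C]_(p, q)) : frob A = Num.sqrt (fsq A).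
Proof. by []. Qed.

Lemma fsqN p q (A : 'M[C]_(p, q)) : fsq (- A) = fsq A.
Proof. by apply: eq_bigr => i _; apply: eq_bigr => j _; rewrite mxE cabsN. Qed.

Lemma fsq_block p q (A : 'M[C]_p) (B : 'M[C]_q) : fsq (block_mx A 0 0 B) = fsq A + fsq B.
Proof.
rewrite /fsq sumr_add; congr (_ + _); apply: eq_bigr => i _; rewrite sumr_add.
  rewrite [X in _ + X]big1 ?addr0; last by move=> j _; rewrite block_mxEur mxE cabs0 expr0n.
  by apply: eq_bigr => j _; rewrite block_mxEul.
rewrite [X in X + _]big1 ?add0r; last by move=> j _; rewrite block_mxEdl mxE cabs0 expr0n.
by apply: eq_bigr => j _; rewrite block_mxEdr.
Qed.

Lemma joint_diff p q (a a' : 'M[C]_p) (b b' : 'M[C]_q) :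
  joint a b - joint a' b' = block_mx (a - a') 0 0 (b - b').
Proof. by rewrite /joint opp_block_mx add_block_mx !oppr0 !addr0. Qed.

Lemma ptB_lin p q (U : 'M[C]_(p * q)) (M1 M2 : 'M[C]_q) :
  ptraceB (dagger U *m (1%:M *t M1)) - ptraceB (dagger U *m (1%:M *t M2)) =
  ptraceB (dagger U *m (1%:M *t (M1 - M2))).
Proof.
apply/matrixP=> i k; rewrite mxE [X in _ + X]mxE !ptB_entry -sumrB.
apply: eq_bigr => j _; rewrite -sumrB; apply: eq_bigr => l _.
by rewrite !mxE mulrBr.
Qed.

Lemma ptA_lin p q (U : 'M[C]_(p * q)) (M1 M2 : 'M[C]_p) :
  ptraceA (dagger U *m (M1 *t 1%:M)) - ptraceA (dagger U *m (M2 *t 1%:M)) =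
  ptraceA (dagger U *m ((M1 - M2) *t 1%:M)).
Proof.
apply/matrixP=> i k; rewrite mxE [X in _ + X]mxE !ptA_entry -sumrB.
apply: eq_bigr => j _; rewrite -sumrB; apply: eq_bigr => l _.
by rewrite !mxE mulrBr.
Qed.

Lemma gameF_diff p q (U : 'M[C]_(p * q)) (a a' : 'M[C]_p) (b b' : 'M[C]_q) :
  gameF U a b - gameF U a' b' =
  block_mx (ptraceB (dagger U *m (1%:M *t (b - b')))) 0 0
           (- ptraceA (dagger U *m ((a - a') *t 1%:M))).
Proof.
rewrite /gameF opp_block_mx add_block_mx !oppr0 !addr0 ptB_lin -opprD.
by rewrite ptA_lin.
Qed.


Lemma sq_le (a b : R) : 0 <= a -> a <= b -> a ^+ 2 <= b ^+ 2.
Proof. by move=> ha hab; nra. Qed.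

Lemma double_CS q (F : 'I_q -> 'I_q -> R) :
  (\sum_j \sum_l F j l) ^+ 2 <= q%:R ^+ 2 * \sum_j \sum_l F j l ^+ 2.
Proof.
apply: (le_trans (CSsum _ (fun j => \sum_l F j l))); rewrite card_ord expr2 -mulrA ler_wpM2l ?ler0n //.
rewrite mulr_sumr; apply: ler_sum => j _.
by have := CSsum _ (F j); rewrite card_ord.
Qed.

Lemma sum_const_ord n (x : R) : \sum_(i < n) x = n%:R * x.
Proof. by rewrite sumr_const card_ord mulr_natl. Qed.

Section Part1.
Variables (p q : nat) (Omega : finType) (P : Omega -> 'M[C]_(p * q)) (u : Omega -> R).
Hypothesis hP : povm P.
Hypothesis hu : forall w, `|u w| <= 1.
Local Notation U := (payoff P u).

Lemma fsqB_bound (M : 'M[C]_q) :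
  fsq (ptraceB (dagger U *m (1%:M *t M))) <= (p * q)%:R ^+ 2 * fsq M.
Proof.
set S := \sum_j \sum_l cabs (M l j).
have hS : 0 <= S by apply: sumr_ge0 => j _; apply: sumr_ge0 => l _; apply: cabs_ge0.
have h1 : fsq (ptraceB (dagger U *m (1%:M *t M))) <= \sum_(i < p) \sum_(k < p) S ^+ 2.
  apply: ler_sum => i _; apply: ler_sum => k _; apply: sq_le; first exact: cabs_ge0.
  rewrite ptB_entry; apply: le_trans (cabs_sum _ _) _; apply: ler_sum => j _.
  apply: le_trans (cabs_sum _ _) _; apply: ler_sum => l _.
  by rewrite cabsM cabsJ; apply: ler_piMl (cabs_ge0 _) (@U_entry _ _ _ _ _ hP hu _ _).
have h2 : S ^+ 2 <= q%:R ^+ 2 * fsq M.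
  apply: le_trans (double_CS _ (fun j l => cabs (M l j))) _.
  by rewrite /fsq exchange_big.
apply: le_trans h1 _; rewrite !sum_const_ord natrM; nra.
Qed.

Lemma fsqA_bound (M : 'M[C]_p) :
  fsq (ptraceA (dagger U *m (M *t 1%:M))) <= (p * q)%:R ^+ 2 * fsq M.
Proof.
set S := \sum_i \sum_k cabs (M k i).
have hS : 0 <= S by apply: sumr_ge0 => j _; apply: sumr_ge0 => l _; apply: cabs_ge0.
have h1 : fsq (ptraceA (dagger U *m (M *t 1%:M))) <= \sum_(j < q) \sum_(l < q) S ^+ 2.
  apply: ler_sum => j _; apply: ler_sum => l _; apply: sq_le; first exact: cabs_ge0.
  rewrite ptA_entry; apply: le_trans (cabs_sum _ _) _; apply: ler_sum => i _.
  apply: le_trans (cabs_sum _ _) _; apply: ler_sum => k _.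
  by rewrite cabsM cabsJ; apply: ler_piMl (cabs_ge0 _) (@U_entry _ _ _ _ _ hP hu _ _).
have h2 : S ^+ 2 <= p%:R ^+ 2 * fsq M.
  apply: le_trans (double_CS _ (fun i k => cabs (M k i))) _.
  by rewrite /fsq exchange_big.
apply: le_trans h1 _; rewrite !sum_const_ord natrM; nra.
Qed.

Lemma part1 (a a' : 'M[C]_p) (b b' : 'M[C]_q) :
  frob (gameF U a b - gameF U a' b') <= (p * q)%:R * frob (joint a b - joint a' b').
Proof.
rewrite gameF_diff joint_diff !frobE !fsq_block fsqN.
rewrite -[X in X * _]ger0_norm ?ler0n // -sqrtr_sqr -sqrtrM ?exprn_ge0 ?ler0n //.
apply: ler_wsqrtr; rewrite mulrDr addrC.
apply: lerD; [exact: fsqA_bound | exact: fsqB_bound].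
Qed.
End Part1.


Lemma daggerT p q (M : 'M[C]_(p, q)) : dagger M = map_mx Num.conj (M^T).
Proof. by rewrite /dagger map_trmx. Qed.

Lemma diag_sf N (d : 'rV[C]_N) k :
  (delta_mx 0 k *m diag_mx d *m delta_mx k 0 : 'M[C]_1) 0 0 = d 0 k.
Proof. by rewrite -rowE -colE !mxE eqxx mulr1n. Qed.

Lemma spec_psd N (A : 'M[C]_N) : psd A ->
  exists (V : 'M[C]_N) (d : 'rV[C]_N),
  [/\ V *m dagger V = 1%:M, dagger V *m V = 1%:M,
      A = dagger V *m diag_mx d *m V & forall k, 0 <= d 0 k].
Proof.
move=> hA; have hH := psd_herm _ _ hA.
have nA : A \is normalmx.
  by apply/normalmxP; rewrite -daggerT hH.
move/orthomx_spectralP: (nA) => eA.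
have hV := spectral_unitarymx A.
have eV : invmx (spectralmx A) = dagger (spectralmx A).
  by rewrite invmx_unitary // daggerT.
have h1 : spectralmx A *m dagger (spectralmx A) = 1%:M.
  by rewrite daggerT; apply/unitarymxP.
have h2 : dagger (spectralmx A) *m spectralmx A = 1%:M.
  by rewrite -eV mulVmx // spectral_unit.
exists (spectralmx A), (spectral_diag A); split => //; first by rewrite -eV.
move=> k; set V := spectralmx A; set d := spectral_diag A.
move: eA; rewrite -/V -/d eV => eA.
have hx := hA (dagger V *m delta_mx k 0).
rewrite {1}eA dagger_mul daggerK dagger_delta in hx.
move: hx; rewrite -!mulmxA [V *m (dagger V *m _)]mulmxA h1 mul1mx.
rewrite [V *m (dagger V *m _)]mulmxA h1 mul1mx !mulmxA.
by rewrite diag_sf.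
Qed.


Lemma sf_gram p q (D : 'M[C]_(p, q)) x : sf (dagger D *m D) x x = (nsq (D *m x))%:C%C.
Proof. by rewrite -sf1 /sf mulmx1 dagger_mul !mulmxA. Qed.

Lemma psd_gram p q (D : 'M[C]_(p, q)) : psd (dagger D *m D).
Proof. by move=> x; rewrite -/(sf _ x x) sf_gram ler0c nsq_ge0. Qed.

Lemma sf_conjug N (W E : 'M[C]_N) x : sf (dagger W *m E *m W) x x = sf E (W *m x) (W *m x).
Proof. by rewrite /sf dagger_mul !mulmxA. Qed.

Lemma psd_conjug N (W E : 'M[C]_N) : psd E -> psd (dagger W *m E *m W).
Proof. by move=> hE x; rewrite -/(sf _ x x) sf_conjug; apply: hE. Qed.

Lemma psd_diag N (e : 'rV[C]_N) : (forall k, 0 <= e 0 k) -> psd (diag_mx e).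
Proof.
move=> he y; rewrite mul_mx_diag mxE; apply: sumr_ge0 => k _.
rewrite mxE daggerE mulrAC -cabs_sqJ; apply: mulr_ge0; last exact: he.
by rewrite ler0c exprn_ge0 ?cabs_ge0.
Qed.

Lemma diag_mulE N (a b : 'rV[C]_N) :
  diag_mx a *m diag_mx b = diag_mx (\row_k (a 0 k * b 0 k)).
Proof.
apply/matrixP=> i j; rewrite mul_diag_mx !mxE.
by case: (eqVneq i j) => [->|hij]; rewrite ?eqxx ?mulr1n //= ?mulr0n ?mulr0.
Qed.

Lemma sqrt_exists p q (D : 'M[C]_(p, q)) :
  exists P0 : 'M[C]_q, psd P0 /\ P0 *m P0 = dagger D *m D.
Proof.
have [W [s [h1 h2 eQ hs]]] := spec_psd _ _ (psd_gram _ _ D).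
set e := \row_k sqrtC (s 0 k).
exists (dagger W *m diag_mx e *m W); split.
  by apply: psd_conjug; apply: psd_diag => k; rewrite mxE sqrtC_ge0.
rewrite eQ -!mulmxA [W *m (dagger W *m _)]mulmxA h1 mul1mx !mulmxA.
rewrite -[_ *m diag_mx e *m diag_mx e]mulmxA diag_mulE; congr (_ *m diag_mx _ *m _).
by apply/rowP=> k; rewrite !mxE -expr2 sqrtCK.
Qed.


Lemma rank1_sum s N (A : 'M[C]_(s, N)) (K : 'M[C]_(s, N)) :
  A *m dagger K = \sum_k col k A *m dagger (col k K).
Proof.
apply/matrixP=> i j; rewrite !mxE summxE; apply: eq_bigr => k _.
by rewrite [RHS]mxE big_ord1 !mxE.
Qed.

Lemma vnorm_le (N : nat) (a : 'cV[C]_N) x : 0 <= x -> nsq a <= x ^+ 2 -> vnorm a <= x.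
Proof.
by move=> hx h; rewrite vnormE -(ger0_norm hx) -sqrtr_sqr; apply: ler_wsqrtr.
Qed.

Lemma gen_bound t s N (f : 'M[C]_s -> 'M[C]_t) (X : 'M[C]_t)
  (A K : 'M[C]_(s, N)) (r : 'I_N -> R) (v : 'cV[C]_t) :
  X = \sum_k f (col k A *m dagger (col k K)) ->
  (forall a b w v, cabs (sf (f (a *m dagger b)) w v) <= vnorm w * vnorm v * (vnorm a * vnorm b)) ->
  (forall k, vnorm (col k A) <= r k) -> (forall k, vnorm (col k K) <= 1) ->
  vnorm v <= 1 -> vnorm (X *m v) <= \sum_k r k.
Proof.
move=> eX hf hA hK hv.
have hr k : 0 <= r k by apply: le_trans (vnorm_ge0 _ _) (hA k).
have hT : 0 <= \sum_k r k by apply: sumr_ge0 => k _.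
set w := X *m v.
have e1 : sf X w v = (nsq w)%:C%C by rewrite -sf1 /sf mulmx1 mulmxA.
have h : nsq w <= vnorm w * \sum_k r k.
  rewrite -[nsq w]ger0_norm ?nsq_ge0 // -cabs_real -e1 eX sfM_sum.
  apply: le_trans (cabs_sum _ _) _; rewrite mulr_sumr; apply: ler_sum => k _.
  apply: le_trans (hf _ _ _ _) _.
  have h1 := vnorm_ge0 _ w; have h2 := vnorm_ge0 _ v; have h3 := vnorm_ge0 _ (col k A).
  have h4 := vnorm_ge0 _ (col k K); have h5 := hA k; have h6 := hK k.
  have h7 : vnorm (col k A) * vnorm (col k K) <= r k.
    apply: (@le_trans _ _ (r k * 1)); last by rewrite mulr1.
    by apply: ler_pM.
  rewrite -mulrA; apply: ler_wpM2l => //.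
  apply: (@le_trans _ _ (1 * r k)); last by rewrite mul1r.
  by apply: ler_pM => //; apply: mulr_ge0.
rewrite -vnorm_sq in h; have := vnorm_ge0 _ w; nra.
Qed.


Lemma ptB_sum p q (U : 'M[C]_(p * q)) (I : finType) (M : I -> 'M[C]_q) :
  ptraceB (dagger U *m (1%:M *t \sum_k M k)) = \sum_k ptraceB (dagger U *m (1%:M *t M k)).
Proof.
apply/matrixP=> i i'; rewrite summxE ptB_entry.
rewrite (eq_bigr (fun k => \sum_j \sum_l Num.conj (U (mxtens_index (i', l)) (mxtens_index (i, j))) * M k l j)); last first.
  by move=> k _; rewrite ptB_entry.
rewrite [RHS]exchange_big; apply: eq_bigr => j _; rewrite [RHS]exchange_big.
by apply: eq_bigr => l _; rewrite summxE mulr_sumr.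
Qed.

Lemma ptA_sum p q (U : 'M[C]_(p * q)) (I : finType) (M : I -> 'M[C]_p) :
  ptraceA (dagger U *m ((\sum_k M k) *t 1%:M)) = \sum_k ptraceA (dagger U *m (M k *t 1%:M)).
Proof.
apply/matrixP=> j l; rewrite summxE ptA_entry.
rewrite (eq_bigr (fun k => \sum_i \sum_i' Num.conj (U (mxtens_index (i', l)) (mxtens_index (i, j))) * M k i' i)); last first.
  by move=> k _; rewrite ptA_entry.
rewrite [RHS]exchange_big; apply: eq_bigr => i _; rewrite [RHS]exchange_big.
by apply: eq_bigr => i' _; rewrite summxE mulr_sumr.
Qed.

Lemma colnsq s N (A : 'M[C]_(s, N)) k : (nsq (col k A))%:C%C = (dagger A *m A) k k.
Proof.
rewrite /nsq rmorph_sum mxE; apply: eq_bigr => i _.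
by rewrite daggerE !mxE -cabs_sqJ.
Qed.

Lemma nsq_colD p q N (G : 'M[C]_(p + q, N)) k : nsq (col k (dsubmx G)) <= nsq (col k G).
Proof.
rewrite [nsq (col k G)]/nsq sumr_add.
have -> : nsq (col k (dsubmx G)) = \sum_(i < q) cabs (col k G (rshift p i) 0) ^+ 2.
  by apply: eq_bigr => i _; rewrite !mxE.
rewrite -[X in X <= _]add0r; apply: lerD => //.
by apply: sumr_ge0 => i _; rewrite exprn_ge0 ?cabs_ge0.
Qed.

Lemma nsq_colU p q N (G : 'M[C]_(p + q, N)) k : nsq (col k (usubmx G)) <= nsq (col k G).
Proof.
rewrite [nsq (col k G)]/nsq sumr_add.
have -> : nsq (col k (usubmx G)) = \sum_(i < p) cabs (col k G (lshift q i) 0) ^+ 2.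
  by apply: eq_bigr => i _; rewrite !mxE.
rewrite -[X in X <= _]addr0; apply: lerD => //.
by apply: sumr_ge0 => i _; rewrite exprn_ge0 ?cabs_ge0.
Qed.

Lemma nsq_col_mx p q (a : 'cV[C]_p) (b : 'cV[C]_q) : nsq (col_mx a b) = nsq a + nsq b.
Proof.
rewrite /nsq sumr_add; congr (_ + _); apply: eq_bigr => i _.
  by rewrite col_mxEu.
by rewrite col_mxEd.
Qed.

Lemma vnorm_col_mx p q (a : 'cV[C]_p) (b : 'cV[C]_q) :
  vnorm (col_mx a b) <= vnorm a + vnorm b.
Proof.
apply: vnorm_le; first by rewrite addr_ge0 ?vnorm_ge0.
rewrite nsq_col_mx -!vnorm_sq; have := vnorm_ge0 _ a; have := vnorm_ge0 _ b; nra.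
Qed.


Section Part2.
Variables (p q : nat) (Omega : finType) (P : Omega -> 'M[C]_(p * q)) (u : Omega -> R).
Hypothesis hP : povm P.
Hypothesis hu : forall w, `|u w| <= 1.
Local Notation U := (payoff P u).

Lemma part2 (Da : 'M[C]_p) (Db : 'M[C]_q) :
  opnorm (block_mx (ptraceB (dagger U *m (1%:M *t Db))) 0 0
                   (- ptraceA (dagger U *m (Da *t 1%:M))))
  <= 2%:R * tracenorm (block_mx Da 0 0 Db).
Proof.
set D := block_mx Da 0 0 Db.
set Pm := absmx D.
have [hPm ePm] : psd Pm /\ Pm *m Pm = dagger D *m D.
  have [P0 hP0] := sqrt_exists _ _ D.
  have := @xgetPex _ 0 [set X : 'M[C]_(p + q) | psd X /\ X *m X = dagger D *m D].
  by apply; exists P0.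
have [V [d [h1 h2 eP hd]]] := spec_psd _ _ hPm.
set F := dagger V.
have FF : dagger F *m F = 1%:M by rewrite /F daggerK.
have FF' : F *m dagger F = 1%:M by rewrite /F daggerK.
pose r k := complex.Re (d 0 k).
have dr k : d 0 k = (r k)%:C%C by rewrite /r RRe_real // ger0_real.
have r0 k : 0 <= r k by rewrite -ler0c -dr.
have trE : tracenorm D = \sum_k r k.
  rewrite /tracenorm -/Pm eP -mulmxA mxtrace_mulC -mulmxA h1 mulmx1 mxtrace_diag.
  by rewrite raddf_sum.
set G := D *m F.
have GG : dagger G *m G = diag_mx d *m diag_mx d.
  rewrite /G dagger_mul /F daggerK !mulmxA -[V *m dagger D *m D]mulmxA -ePm eP.
  rewrite !mulmxA h1 mul1mx -[_ *m V *m dagger V]mulmxA h1 mulmx1.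
  by rewrite -[_ *m V *m dagger V]mulmxA h1 mulmx1.
have nG k : nsq (col k G) = r k ^+ 2.
  by apply: complexI; rewrite colnsq GG diag_mulE !mxE eqxx mulr1n dr rmorphXn /= expr2.
have nF k : nsq (col k F) = 1.
  by apply: complexI; rewrite colnsq FF !mxE eqxx /=.
set H := usubmx F; set K := dsubmx F.
have eF : F = col_mx H K by rewrite vsubmxK.
have eG : G = col_mx (Da *m H) (Db *m K).
  by rewrite /G eF /D mul_block_col !mul0mx addr0 add0r.
have [HH KK] : H *m dagger H = 1%:M /\ K *m dagger K = 1%:M.
  move: FF'; rewrite eF !daggerT tr_col_mx map_row_mx -!daggerT mul_col_row.
  by rewrite [1%:M]scalar_mx_block => /eq_block_mx [-> _ _ ->].
have eDb : Db = \sum_k col k (Db *m K) *m dagger (col k K).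
  by rewrite -rank1_sum -mulmxA KK mulmx1.
have eDa : Da = \sum_k col k (Da *m H) *m dagger (col k H).
  by rewrite -rank1_sum -mulmxA HH mulmx1.
have nK k : vnorm (col k K) <= 1.
  by apply: vnorm_le => //; rewrite expr1n -(nF k); apply: nsq_colD.
have nH k : vnorm (col k H) <= 1.
  by apply: vnorm_le => //; rewrite expr1n -(nF k); apply: nsq_colU.
have nDbK k : vnorm (col k (Db *m K)) <= r k.
  apply: vnorm_le => //; rewrite -nG.
  by have := nsq_colD _ _ _ G k; rewrite eG col_mxKd.
have nDaH k : vnorm (col k (Da *m H)) <= r k.
  apply: vnorm_le => //; rewrite -nG.
  by have := nsq_colU _ _ _ G k; rewrite eG col_mxKu.
rewrite /opnorm; apply: ge_sup.
  exists (vnorm (block_mx (ptraceB (dagger U *m (1%:M *t Db))) 0 0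
                   (- ptraceA (dagger U *m (Da *t 1%:M))) *m 0)); exists 0; split => //.
  by apply: vnorm_le => //; rewrite /nsq big1 ?expr1n // => i _; rewrite mxE cabs0 expr0n.
move=> x [v [hv ->]].
have hv1 : vnorm (usubmx v) <= 1.
  apply: vnorm_le => //; rewrite expr1n; apply: le_trans (_ : nsq v <= 1).
    by rewrite -{2}(vsubmxK v) nsq_col_mx lerDl nsq_ge0.
  by rewrite -vnorm_sq; have := vnorm_ge0 _ v; nra.
have hv2 : vnorm (dsubmx v) <= 1.
  apply: vnorm_le => //; rewrite expr1n; apply: le_trans (_ : nsq v <= 1).
    by rewrite -{2}(vsubmxK v) nsq_col_mx lerDr nsq_ge0.
  by rewrite -vnorm_sq; have := vnorm_ge0 _ v; nra.
rewrite -(vsubmxK v) mul_block_col !mul0mx addr0 add0r.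
apply: le_trans (vnorm_col_mx _ _ _ _) _.
rewrite trE mulr_natl mulr2n; apply: lerD.
  apply: (@gen_bound _ _ _ (fun M => ptraceB (dagger U *m (1%:M *t M)))) => //.
  - by rewrite {1}eDb ptB_sum.
  - by move=> a b w v'; apply: ptB_bound.
apply: (@gen_bound _ _ _ (fun M => - ptraceA (dagger U *m (M *t 1%:M)))) => //.
- by rewrite {1}eDa ptA_sum -sumrN.
- by move=> a b w v'; rewrite sfMN cabsN; apply: ptA_bound.
Qed.
End Part2.

End S.

Theorem mainTheorem5 (R : realType) :
  (* Frobenius pair: gamma = O(2^d), d = n + m, uniformly over all games *)
  (exists c : R, 0 < c /\
    forall (n m : nat) (Omega : finType) (P : Omega -> 'M[R[i]]_(2 ^ n * 2 ^ m))
      (u : Omega -> R) (alpha alpha' : 'M[R[i]]_(2 ^ n))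
      (beta beta' : 'M[R[i]]_(2 ^ m)),
    povm P -> (forall w, `|u w| <= 1) ->
    density alpha -> density alpha' -> density beta -> density beta' ->
    frob (gameF (payoff P u) alpha beta - gameF (payoff P u) alpha' beta')
      <= (c * 2 ^+ (n + m)) * frob (joint alpha beta - joint alpha' beta'))
  /\
  (* trace norm / operator norm pair: gamma = O(1), uniformly over all games *)
  (exists c : R, 0 < c /\
    forall (n m : nat) (Omega : finType) (P : Omega -> 'M[R[i]]_(2 ^ n * 2 ^ m))
      (u : Omega -> R) (alpha alpha' : 'M[R[i]]_(2 ^ n))
      (beta beta' : 'M[R[i]]_(2 ^ m)),
    povm P -> (forall w, `|u w| <= 1) ->
    density alpha -> density alpha' -> density beta -> density beta' ->
    opnorm (gameF (payoff P u) alpha beta - gameF (payoff P u) alpha' beta')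
      <= c * tracenorm (joint alpha beta - joint alpha' beta')).
Proof.
split.
  exists 1; split => // n m Omega P u a a' b b' hP hu _ _ _ _.
  rewrite mul1r exprD -!natrX -natrM.
  exact: (@part1 R _ _ Omega P u hP hu).
exists 2%:R; split => // n m Omega P u a a' b b' hP hu _ _ _ _.
rewrite gameF_diff joint_diff.
exact: (@part2 R _ _ Omega P u hP hu).
Qed.
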